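(* Let $\Sigma=(X,U,F)$ be a system and $Q\subset X$ a controlled invariant set. If $K\subset Q$ and $K=\bigcup_{i=1}^m K_i$ with nonempty $K_1,\dots,K_m$, then \[h_{inv}(K,Q)=\max_{i=1,\ldots,m}h_{inv}(K_i,Q).\]
   Context: A system is a triple $\Sigma=(X,U,F)$ where $X,U$ are nonempty sets and $F:X\times U\rightrightarrows X$ is a set-valued map with $F(x,u)\neq\emptyset$ for all $(x,u)$. For $A\subset X$ and $u\in U$, $F(A,u)=\bigcup_{x\in A}F(x,u)$. A set $Q\subset X$ is controlled invariant if for every $x\in Q$ there is $u\in U$ with $F(x,u)\subset Q$. For $u\in U$ put $Q_u=\{x\in Q: F(x,u)\subset Q\}$. Elements of $U^n$ are written $\omega=\omega_0\omega_1\cdots\omega_{n-1}$, and $\omega_{[0,i]}=\omega_0\cdots\omega_i$. A set $S\subset U^n$ is an admissible family of length $n$ for $Q$ if (a) $\omega'_0=\omega''_0$ for all $\omega',\omega''\in S$, and (b) there exists $x\in Q$ such that for every $\omega\in S$, with $I^0_\omega(x)=\{x\}$: for all $i=0,1,\dots,n-2$, $F(I^i_\omega(x),\omega_i)\subset\bigcup_{\omega'\in S,\ \omega'_{[0,i]}=\omega_{[0,i]}}Q_{\omega'_{i+1}}$ and $I^{i+1}_\omega(x):=F(I^i_\omega(x),\omega_i)\cap Q_{\omega_{i+1}}\neq\emptyset$; and $I^n_\omega(x):=F(I^{n-1}_\omega(x),\omega_{n-1})\subset Q$. Let $AF^n(Q)$ be the set of admissible families of length $n$ for $Q$, and for $S\in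 AF^n(Q)$ let $Q_S$ be the set of all $x\in Q$ satisfying (b). For nonempty $K\subset Q$, a set $\mathscr{S}\subset U^n$ is $(n,K,Q)$-spanning if $K\subset\bigcup_{S\subset\mathscr{S},\,S\in AF^n(Q)}Q_S$. Let $r_{inv}(n,K,Q)=\inf\{\sharp\mathscr{S}:\mathscr{S}\text{ is }(n,K,Q)\text{-spanning}\}$ (with $\inf\emptyset=\infty$), and the invariance entropy $h_{inv}(K,Q)=\limsup_{n\to\infty}\frac1n\log r_{inv}(n,K,Q)$, where $\log$ is base $2$. *)

(* Defs.v *)
From HB Require Import structures.
From mathcomp Require Import all_boot all_order all_algebra.
From mathcomp Require Import all_classical all_reals all_analysis.
Set Implicit Arguments. Unset Strict Implicit. Unset Printing Implicit Defensive.
Import Order.TTheory GRing.Theory Num.Theory.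
Local Open Scope classical_set_scope.
Local Open Scope ring_scope.

Section InvarianceEntropy.
Variables (R : realType) (X U : Type) (F : X -> U -> set X).

Definition Fimg (A : set X) (u : U) : set X := [set y | exists2 z, A z & F z u y].

Definition controlled_invariant (Q : set X) : Prop :=
  forall x, Q x -> exists u : U, F x u `<=` Q.

Definition Qsub (Q : set X) (u : U) : set X := [set x | Q x /\ F x u `<=` Q].

(* words of length n are maps 'I_n -> U; letter at a nat position (None if out of range) *)
Definition wat n (w : 'I_n -> U) (i : nat) : option U := omap w (insub i).

(* I^i_w(x) for i = 0, ..., n-1 :
   I^0 = {x},  I^{i+1} = F(I^i, w_i) \cap Q_{w_{i+1}} *)
Fixpoint Iset (Q : set X) n (w : 'I_n -> U) (x : X) (i : nat) : set X :=
  match i with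
  | 0 => [set x]
  | i'.+1 => [set y | exists u v, wat w i' = Some u /\ wat w i'.+1 = Some v /\
                       Fimg (Iset Q w x i') u y /\ Qsub Q v y]
  end.

Definition adm_point (Q : set X) n (S : set ('I_n -> U)) (x : X) : Prop :=
  Q x /\
  forall w, S w ->
    (forall i : nat, (i.+1 < n)%N -> forall u, wat w i = Some u ->
       Fimg (Iset Q w x i) u `<=`
         [set y | exists2 w', (S w' /\ forall j : 'I_n, (j <= i)%N -> w' j = w j) &
                    exists v, wat w' i.+1 = Some v /\ Qsub Q v y]
       /\ Iset Q w x i.+1 !=set0)
    /\ (forall u, wat w n.-1 = Some u -> Fimg (Iset Q w x n.-1) u `<=` Q).

Definition admissible (Q : set X) n (S : set ('I_n -> U)) : Prop :=
  S !=set0 /\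
  (forall w' w'', S w' -> S w'' -> wat w' 0 = wat w'' 0) /\
  exists x, adm_point Q S x.

Definition QS (Q : set X) n (S : set ('I_n -> U)) : set X := [set x | adm_point Q S x].

Definition spanning n (K Q : set X) (Sc : set ('I_n -> U)) : Prop :=
  K `<=` [set x | exists S, S `<=` Sc /\ admissible Q S /\ QS Q S x].

(* r_inv(n,K,Q): infimum of the cardinalities of spanning sets
   (infinite spanning sets have cardinality +oo; inf of the empty set is +oo) *)
Definition r_inv n (K Q : set X) : \bar R :=
  ereal_inf [set (k%:R)%:E | k in [set k : nat |
     exists Sc : set ('I_n -> U), spanning K Q Sc /\ (Sc #= `I_k)%card]].

Definition elog2 (r : \bar R) : \bar R :=
  match r with
  | x%:E => (ln x / ln 2)%:E
  | +oo%E => +oo%E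
  | -oo%E => -oo%E
  end.

Definition h_inv (K Q : set X) : \bar R :=
  limn_esup (fun n : nat => ((n%:R)^-1)%:E * elog2 (r_inv n K Q))%E.

End InvarianceEntropy.

(* Main.v *)
From HB Require Import structures.
From mathcomp Require Import all_boot all_order all_algebra.
From mathcomp Require Import all_classical all_reals all_analysis.
From mathcomp Require Import zify ring lra.
Require Import Defs.
Import Order.TTheory GRing.Theory Num.Theory.
Local Open Scope classical_set_scope.
Local Open Scope ring_scope.

Section Limsup.
Context {R : realType}.
Implicit Types (u v : (\bar R)^nat).
Local Open Scope ereal_scope.

Lemma A1 u v : (forall n, u n <= v n) -> limn_esup u <= limn_esup v.
Proof.
move=> uv; rewrite /limn_esup /limf_esup.
apply: le_ereal_inf_tmp => _ [V FV <-].
apply: le_trans (ereal_inf_lbound _) _; first by exists V.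
apply: ge_ereal_sup => _ [n Vn <-].
apply: le_trans (uv n) _; apply: ereal_sup_ubound; by exists n.
Qed.

Lemma A2 u r : (\forall n \near \oo, u n <= r) -> limn_esup u <= r.
Proof.
move=> ev; rewrite /limn_esup /limf_esup.
apply: le_trans (ereal_inf_lbound _) _.
  by exists [set n | u n <= r].
by apply: ge_ereal_sup => _ [n Vn <-].
Qed.

Lemma A3 u r : limn_esup u < r -> \forall n \near \oo, u n < r.
Proof.
rewrite /limn_esup /limf_esup => /ereal_inf_lt [_ [V FV <-] supr].
apply: filterS FV => n Vn; apply: le_lt_trans supr.
by apply: ereal_sup_ubound; exists n.
Qed.

Lemma A4 u M : (forall r : R, M < r%:E -> limn_esup u <= r%:E) ->
  limn_esup u <= M.
Proof.
case: M => [x| |] H.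
- apply/lee_addgt0Pr => e e0; apply: H; rewrite lte_fin ltrDl //.
- exact: leey.
- case E: (limn_esup u) => [y| |] //.
  + have := H (y - 1)%R (ltNyr _); rewrite E lee_fin => h.
    by move: h; rewrite lerDl oppr_ge0 ler10.
  + by have := H 0%R (ltNyr _); rewrite E.
Qed.

End Limsup.

Section Rinv.
Context {R : realType} {X U : Type} (F : X -> U -> set X).
Local Open Scope ereal_scope.

Lemma r_inv_cases n K Q : r_inv R F n K Q = +oo \/
  exists k (Sc : set ('I_n -> U)), spanning F K Q Sc /\ (Sc #= `I_k)%card /\
    r_inv R F n K Q = (k%:R)%:E.
Proof.
set P := [set k : nat | exists Sc : set ('I_n -> U), spanning F K Q Sc /\ (Sc #= `I_k)%card].
have rE : r_inv R F n K Q = ereal_inf [set (k%:R)%:E | k in P] by [].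
case: (pselect (exists k, P k)) => [ex|nex]; last first.
  left; rewrite rE.
  apply/eqP; rewrite eq_le leey /=.
  by apply: le_ereal_inf_tmp => y [k Pk _]; exfalso; apply: nex; exists k.
right.
have exb : exists k, (fun k => `[< P k >]) k by case: ex => k Pk; exists k; apply/asboolP.
case: (ex_minnP exb) => k0 /asboolP Pk0 kmin.
case: (Pk0) => Sc [sp ce]; exists k0, Sc; split => //; split => //.
apply/eqP; rewrite eq_le; apply/andP; split.
  by apply: ereal_inf_lbound; exists k0.
apply: le_ereal_inf_tmp => _ [k Pk <-]; rewrite lee_fin ler_nat.
by apply: kmin; apply/asboolP.
Qed.

Lemma r_inv_mono n K1 K2 Q : K1 `<=` K2 -> r_inv R F n K1 Q <= r_inv R F n K2 Q.
Proof.
move=> K12; apply: le_ereal_inf => _ [k [Sc [sp ce]] <-]; exists k => //.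
by exists Sc; split => //; move=> x /K12 /sp.
Qed.

Definition natlike (a : \bar R) := a = +oo \/ exists k : nat, a = (k%:R)%:E.

Lemma natlike_r n K Q : natlike (r_inv R F n K Q).
Proof.
case: (r_inv_cases n K Q) => [->|[k [Sc [_ [_ ->]]]]]; first by left.
by right; exists k.
Qed.

Lemma ln2_gt0 : (0 < ln (2 : R))%R.
Proof. by apply: ln_gt0; rewrite ltr1n. Qed.

Lemma ln_nat_ge0 k : (0 <= ln (k%:R : R))%R.
Proof.
case: k => [|k]; first by rewrite ln0.
by apply: ln_ge0; rewrite ler1n.
Qed.

Lemma ln_nat_le k k' : (k <= k')%N -> (ln (k%:R : R) <= ln (k'%:R : R))%R.
Proof.
case: k => [|k] kk'; first by rewrite ln0 // ln_nat_ge0.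
rewrite ler_ln ?ler_nat // posrE ltr0n //.
by apply: leq_trans kk'.
Qed.

Lemma elog2_le a b : natlike a -> natlike b -> a <= b -> elog2 a <= elog2 b.
Proof.
move=> [->|[k ->]] [->|[k' ->]] //=; rewrite ?leey //.
rewrite !lee_fin ler_nat => kk'.
by rewrite ler_pM2r ?invr_gt0 ?ln2_gt0 // ln_nat_le.
Qed.

Lemma ln_nat_mul ka m k : (0 < m)%N -> (ka <= m * k)%N ->
  (ln (ka%:R : R) <= ln (m%:R : R) + ln (k%:R : R))%R.
Proof.
move=> m0 kak.
case: ka kak => [|ka] kak.
  by rewrite ln0 // addr_ge0 // ln_nat_ge0.
have k0 : (0 < k)%N by case: k kak; rewrite ?muln0.
rewrite -lnM ?posrE ?ltr0n // -natrM ler_ln ?posrE ?ltr0n ?muln_gt0 ?m0 //.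
by rewrite ler_nat.
Qed.


Lemma r_inv_union (u0 : U) n m' (Ks : 'I_m'.+1 -> set X) K Q (ks : 'I_m'.+1 -> nat) kmax :
  K `<=` \bigcup_(i in [set: 'I_m'.+1]) Ks i ->
  (forall i, r_inv R F n (Ks i) Q = ((ks i)%:R)%:E) ->
  (forall i, (ks i <= kmax)%N) ->
  r_inv R F n K Q <= (((m'.+1 * kmax)%N)%:R)%:E.
Proof.
move=> HK hk hmax.
have H i : exists p : set ('I_n -> U) * (nat -> ('I_n -> U)),
    spanning F (Ks i) Q p.1 /\ p.1 `<=` p.2 @` `I_(ks i).
  case: (r_inv_cases n (Ks i) Q) => [|[k [Sc [sp [ce rE]]]]]; first by rewrite hk.
  have kk : k = ks i by move: rE; rewrite hk => /eqP; rewrite eqe eqr_nat => /eqP.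
  subst k; case/card_eqPle: ce => le _.
  case/pfcard_geP: le => [E|/surjfunPex [f E]].
    by exists (Sc, fun _ _ => u0); split => //; rewrite /= E.
  by exists (Sc, f); split => //; rewrite /= E.
case: (choice H) => P HP.
pose Sc := \bigcup_(i in [set: 'I_m'.+1]) (P i).1.
have spS : spanning F K Q Sc.
  move=> x /HK [i _ /(proj1 (HP i)) [S [SS [adm qs]]]].
  exists S; split => //; move=> w /SS Sw; by exists i.
pose G := fun p => (P (inord (p %/ kmax)%N)).2 (p %% kmax)%N.
have sub : Sc `<=` G @` `I_(m'.+1 * kmax).
  move=> w [i _ /(proj2 (HP i)) [j jk <-]].
  have := ltn_ord i; have := hmax i; move: jk; rewrite /= => jk h1 h2.
  exists (i * kmax + j)%N; first by rewrite /=; nia.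
  have kpos : (0 < kmax)%N by lia.
  rewrite /G divnMDl // (divn_small (_ : j < kmax)%N) ?addn0; last by lia.
  by rewrite modnMDl modn_small ?inord_val //; lia.
have le : (Sc #<= `I_(m'.+1 * kmax))%card.
  exact: card_le_trans (subset_card_le sub) (card_image_le _ _).
have [k ce] : finite_set Sc by apply/finite_set_leP; eexists; exact: le.
have kle : (k <= m'.+1 * kmax)%N.
  rewrite -card_le_II; apply: card_le_trans le; by case/card_eqPle: ce.
apply: (@le_trans _ _ ((k%:R)%:E)); last by rewrite lee_fin ler_nat.
by apply: ereal_inf_lbound; exists k => //; exists Sc.
Qed.

End Rinv.

Theorem proposition2p7 (R : realType) (X U : Type) (F : X -> U -> set X)
  (Q K : set X) (m : nat) (Ks : 'I_m -> set X) :
  inhabited X -> inhabited U ->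
  (forall x u, F x u !=set0) ->
  controlled_invariant F Q ->
  K `<=` Q ->
  (0 < m)%N ->
  K = \bigcup_(i in [set: 'I_m]) Ks i ->
  (forall i, Ks i !=set0) ->
  h_inv R F K Q = (\big[maxe/-oo%E]_(i < m) h_inv R F (Ks i) Q)%E.
Proof.
move=> [x0] [u0] Fne ci KQ m0 HK Kne.
case: m m0 Ks HK Kne => [//|m'] m0 Ks HK Kne.
pose t := fun K' n => ((n%:R^-1)%:E * elog2 (r_inv R F n K' Q))%E.
have HK' : K `<=` \bigcup_(i in [set: 'I_m'.+1]) Ks i by rewrite HK.
apply/eqP; rewrite eq_le; apply/andP; split; last first.
  apply: bigmax_le; first exact: leNye.
  move=> i _; apply: A1 => n; apply: lee_wpmul2l.
    by rewrite lee_fin invr_ge0 ler0n.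
  apply: elog2_le; [exact: natlike_r|exact: natlike_r|].
  by apply: r_inv_mono => x Kx; rewrite HK; exists i.
set M := (\big[maxe/-oo%E]_(i < m'.+1) h_inv R F (Ks i) Q)%E.
apply: A4 => r Mr.
have [s [Ms sr]] : exists s : R, (M < s%:E)%E /\ s < r.
  move: Mr; case: M => [x| |] //= xr.
    exists ((x + r) / 2); rewrite lte_fin in xr.
    by have [h1 h2] := midf_lt xr; rewrite lte_fin.
  by exists (r - 1); split; [exact: ltNyr| rewrite gtrDl oppr_lt0 ltr01].
have E1 : \forall n \near \oo, forall i, (t (Ks i) n < s%:E)%E.
  apply: filter_forall => i; apply: A3; apply: le_lt_trans Ms.
  exact: le_bigmax.
pose c := ln (m'.+1%:R : R) / ln 2.
have c0 : 0 <= c by rewrite divr_ge0 ?ln_nat_ge0 ?ltW ?ln2_gt0.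
have rs0 : 0 < r - s by rewrite subr_gt0.
have E2 : \forall n \near \oo, n%:R^-1 * c < r - s.
  near=> n.
  have hn : ((Num.Def.trunc (c / (r - s))).+1 <= n)%N.
    by near: n; exists (Num.Def.trunc (c / (r - s))).+1.
  have := truncnS_gt (c / (r - s)).
  rewrite ltr_pdivrMr // => h.
  have n0 : (0 < n)%N by apply: leq_trans hn.
  rewrite mulrC ltr_pdivrMr ?ltr0n //.
  apply: lt_le_trans h _; rewrite mulrC ler_pM2l // ler_nat //.
apply: A2; apply: filterS2 E1 E2 => -[|n] Hi Hn.
  have := Hi ord0; rewrite /t invr0 !mul0e lte_fin => h.
  by rewrite lee_fin; apply: ltW; apply: lt_trans sr.
have fin i : exists k, r_inv R F n.+1 (Ks i) Q = ((k%:R)%:E)%E.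
  case: (natlike_r (R:=R) F n.+1 (Ks i) Q) => [E|//].
  have := Hi i; rewrite /t E /= gt0_muley ?lte_fin ?invr_gt0 ?ltr0n //.
case: (choice fin) => ks hks.
have cI : (0 < #|'I_m'.+1|)%N by rewrite card_ord.
have [i0 Ei0] := @bigop.eq_bigmax _ ks cI.
set kmax := (\max_(i < m'.+1) ks i)%N in Ei0.
have rK := @r_inv_union R X U F u0 n.+1 m' Ks K Q ks kmax HK' hks (fun i => @leq_bigmax _ ks i).
case: (natlike_r (R:=R) F n.+1 K Q) => [E|[ka E]]; first by rewrite E in rK.
have kale : (ka <= m'.+1 * kmax)%N by move: rK; rewrite E lee_fin ler_nat.
have := Hi i0; rewrite /t hks -Ei0 E /= -!EFinM !lte_fin lee_fin => h.
have := @ln_nat_mul R ka m'.+1 kmax m0 kale.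
move: Hn h; rewrite /c.
set A := n.+1%:R^-1; set L := ln (2 : R).

have e x : A * (x / L) = (A / L) * x by rewrite mulrA mulrAC.
have B0 : 0 < A / L by rewrite divr_gt0 ?ln2_gt0 // /A invr_gt0 ltr0n.
rewrite !e => h1 h2 h3.
apply: le_trans (ler_wpM2l (ltW B0) h3) _; rewrite mulrDr; apply: ltW.
by have := ltrD h1 h2; rewrite subrK.
Unshelve. all: by end_near.
Qed.
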